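(* Let $f(z)=\sum_{n\ge1} f_n z^n$ be a formal power series over $\mathbb{C}$ with $f_1\neq 0$ such that $-f(z)$ has compositional order exactly $2$, i.e. $-f(-f(z))=z$ and $-f(z)\neq z$. Then the set $\{g(z)\in F_0[[z]] : (g(z),f(z)) \text{ is a pseudo-involution}\}$ is an infinite subgroup of the multiplicative group $F_0[[z]]$.
   Context: $F_0[[z]]$ denotes the set of formal power series over $\mathbb{C}$ with nonzero constant term, which is a group under multiplication of power series. A Riordan matrix is a pair $(g(z),f(z))$ of formal power series over $\mathbb{C}$ with $g(z)=\sum_{n\ge 0} g_n z^n$, $g_0\neq 0$, and $f(z)=\sum_{n\ge 1} f_n z^n$ with $f_1\neq 0$; it represents the infinite lower-triangular matrix whose $k$-th column ($k\ge 0$) has generating function $g(z)f(z)^k$. Riordan matrices form a group under matrix multiplication, where $(g(z),f(z))*(h(z),l(z))=(g(z)h(f(z)),\,l(f(z)))$ and the identity is $(1,z)$. Let $M=(1,-z)$. A Riordan matrix $L$ is called a pseudo-involution if $(L*M)*(L*M)=(1,z)$. *)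

(* Defs.v *)
From mathcomp Require Import all_boot all_algebra.
From mathcomp Require Import complex.
From mathcomp Require Import Rstruct.
Set Implicit Arguments. Unset Strict Implicit. Unset Printing Implicit Defensive.
Import GRing.Theory.
Local Open Scope ring_scope.

Definition C : fieldType := (Rdefinitions.R)[i].

Definition fps := nat -> C.

Definition fps_one : fps := fun n => (n == 0)%:R.
Definition fps_X : fps := fun n => (n == 1)%:R.
Definition fps_opp (a : fps) : fps := fun n => - a n.
Definition fps_mul (a b : fps) : fps :=
  fun n => \sum_(i < n.+1) a i * b (n - i)%N.
Definition fps_pow (a : fps) (k : nat) : fps := iter k (fps_mul a) fps_one.
(* composition g(f(z)); meaningful when f 0 = 0 (then f^k has order >= k) *)
Definition fps_comp (g f : fps) : fps :=
  fun n => \sum_(k < n.+1) g k * fps_pow f k n.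

Definition in_F0 (g : fps) : Prop := g 0%N != 0.

Definition is_riordan (L : fps * fps) : Prop :=
  L.1 0%N != 0 /\ L.2 0%N = 0 /\ L.2 1%N != 0.

Definition riordan_mul (L K : fps * fps) : fps * fps :=
  (fps_mul L.1 (fps_comp K.1 L.2), fps_comp K.2 L.2).

Definition riordan_id : fps * fps := (fps_one, fps_X).
Definition riordan_M : fps * fps := (fps_one, fps_opp fps_X).

Definition pseudo_involution (L : fps * fps) : Prop :=
  is_riordan L /\
  riordan_mul (riordan_mul L riordan_M) (riordan_mul L riordan_M) = riordan_id.

Definition PI_set (f : fps) (g : fps) : Prop :=
  in_F0 g /\ pseudo_involution (g, f).

(* Main.v *)
Require Import Defs.
From mathcomp Require Import all_boot all_algebra.
From mathcomp Require Import complex Rstruct.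
From Stdlib Require Import FunctionalExtensionality Classical.
From mathcomp Require Import zify ring.
Set Implicit Arguments. Unset Strict Implicit. Unset Printing Implicit Defensive.
Import GRing.Theory Num.Theory.
Local Open Scope ring_scope.

Definition tr (n : nat) (a : fps) : {poly C} := \poly_(i < n.+1) a i.
Definition eqm (n : nat) (p q : {poly C}) := forall i, (i <= n)%N -> p`_i = q`_i.

Lemma coef_tr n a i : (tr n a)`_i = if (i <= n)%N then a i else 0.
Proof. by rewrite coef_poly ltnS. Qed.

Lemma eqm_refl n p : eqm n p p. Proof. by []. Qed.
Lemma eqm_sym n p q : eqm n p q -> eqm n q p.
Proof. by move=> H i Hi; rewrite H. Qed.
Lemma eqm_trans n p q r : eqm n p q -> eqm n q r -> eqm n p r.
Proof. by move=> H1 H2 i Hi; rewrite H1 // H2. Qed.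
Lemma eqm_add n p q p' q' : eqm n p p' -> eqm n q q' -> eqm n (p + q) (p' + q').
Proof. by move=> H1 H2 i Hi; rewrite !coefD H1 // H2. Qed.
Lemma eqm_opp n p p' : eqm n p p' -> eqm n (- p) (- p').
Proof. by move=> H1 i Hi; rewrite !coefN H1. Qed.
Lemma eqm_scale n c p p' : eqm n p p' -> eqm n (c *: p) (c *: p').
Proof. by move=> H1 i Hi; rewrite !coefZ H1. Qed.
Lemma eqm_mul n p q p' q' : eqm n p p' -> eqm n q q' -> eqm n (p * q) (p' * q').
Proof.
move=> H1 H2 i Hi; rewrite !coefM; apply: eq_bigr => j _.
have Hj : (j <= n)%N by apply: leq_trans Hi; rewrite -ltnS.
rewrite H1 // H2 //; apply: leq_trans Hi; exact: leq_subr.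
Qed.
Lemma eqm_exp n p p' k : eqm n p p' -> eqm n (p ^+ k) (p' ^+ k).
Proof.
move=> H; elim: k => [|k IH]; first by rewrite !expr0.
by rewrite !exprS; apply: eqm_mul.
Qed.

Lemma lowXk (q : {poly C}) : q`_0 = 0 -> forall k j, (j < k)%N -> (q ^+ k)`_j = 0.
Proof.
move=> q0; elim=> [|k IH] j //= Hj.
rewrite exprS coefM big1 // => [[a Ha]] _ /=.
case: a Ha => [|a] Ha; first by rewrite q0 mul0r.
rewrite IH ?mulr0 //.
move: Hj Ha; rewrite !ltnS => Hj Ha; lia.
Qed.

Lemma coef_comp_N (p q : {poly C}) N i : (size p <= N)%N ->
  (p \Po q)`_i = \sum_(k < N) p`_k * (q^+k)`_i.
Proof.
move=> HN; rewrite coef_comp_poly (big_ord_widen N (fun k => p`_k * (q^+k)`_i)) //.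
rewrite big_mkcond; apply: eq_bigr => k _; case: ifP => // /negbT.
by rewrite -leqNgt => H; rewrite nth_default // mul0r.
Qed.

Lemma eqm_comp1 n (p p' q : {poly C}) : q`_0 = 0 -> eqm n p p' -> eqm n (p \Po q) (p' \Po q).
Proof.
move=> q0 H i Hi.
rewrite (@coef_comp_N p q _ i (leq_maxl (size p) (size p'))).
rewrite (@coef_comp_N p' q _ i (leq_maxr (size p) (size p'))).
apply: eq_bigr => k _; case: (leqP k i) => Hk.
  by rewrite H //; apply: leq_trans Hi.
by rewrite lowXk // !mulr0.
Qed.

Lemma eqm_comp2 n (p q q' : {poly C}) : eqm n q q' -> eqm n (p \Po q) (p \Po q').
Proof.
move=> H i Hi; rewrite !coef_comp_poly; apply: eq_bigr => k _.
by rewrite (@eqm_exp n q q' k H).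
Qed.

Lemma eqm_comp n (p p' q q' : {poly C}) : q`_0 = 0 -> eqm n p p' -> eqm n q q' ->
  eqm n (p \Po q) (p' \Po q').
Proof.
move=> q0 H1 H2; apply: eqm_trans (@eqm_comp1 n p p' q q0 H1) _; exact: eqm_comp2.
Qed.

Lemma mul_coef n a b m : (m <= n)%N -> fps_mul a b m = (tr n a * tr n b)`_m.
Proof.
move=> Hm; rewrite coefM; apply: eq_bigr => [[j Hj]] _ /=.
rewrite !coef_tr; rewrite ltnS in Hj.
rewrite (leq_trans Hj Hm) (leq_trans (leq_subr j m) Hm) //.
Qed.

Lemma pow_coef n a k m : (m <= n)%N -> fps_pow a k m = ((tr n a)^+k)`_m.
Proof.
elim: k m => [|k IH] m Hm; first by rewrite expr0 coef1.
rewrite exprS coefM /= -/(fps_pow a k); apply: eq_bigr => [[j Hj]] _ /=.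
rewrite ltnS in Hj.
rewrite coef_tr (leq_trans Hj Hm) IH //; apply: leq_trans Hm; exact: leq_subr.
Qed.

Lemma comp_coef n g h m : h 0%N = 0 -> (m <= n)%N ->
  fps_comp g h m = (tr n g \Po tr n h)`_m.
Proof.
move=> h0 Hm.
rewrite (@coef_comp_N (tr n g) (tr n h) n.+1 m (size_poly _ _)).
rewrite /fps_comp (big_ord_widen n.+1 (fun k => g k * fps_pow h k m)) ?ltnS //.
rewrite big_mkcond; apply: eq_bigr => [[k Hk]] _ /=.
case: ifP => Hkm.
  have Hkn : (k <= n)%N by rewrite ltnS in Hkm; exact: leq_trans Hkm Hm.
  by rewrite coef_tr Hkn (@pow_coef n h k m Hm).
have H0 : (tr n h)`_0 = 0 by rewrite coef_tr h0.
have Hmk : (m < k)%N by rewrite ltnNge -ltnS Hkm.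
by rewrite (lowXk H0 Hmk) mulr0.
Qed.

Lemma tr_mul n a b : eqm n (tr n (fps_mul a b)) (tr n a * tr n b).
Proof. by move=> i Hi; rewrite coef_tr Hi (@mul_coef n a b i Hi). Qed.

Lemma tr_comp n g h : h 0%N = 0 -> eqm n (tr n (fps_comp g h)) (tr n g \Po tr n h).
Proof. by move=> h0 i Hi; rewrite coef_tr Hi (@comp_coef n g h i h0 Hi). Qed.

Lemma tr_one n : tr n fps_one = 1.
Proof.
apply/polyP => i; rewrite coef_tr coef1 /fps_one.
by case: i => [|i] //=; case: ifP.
Qed.

Lemma tr_X n : eqm n (tr n fps_X) 'X.
Proof. by move=> i Hi; rewrite coef_tr Hi coefX. Qed.

Lemma tr_opp n a : tr n (fps_opp a) = - tr n a.
Proof. by apply/polyP => i; rewrite coefN !coef_tr; case: ifP; rewrite ?oppr0. Qed.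

Lemma fps_ext (a b : fps) : (forall n, eqm n (tr n a) (tr n b)) -> a = b.
Proof.
move=> H; apply: functional_extensionality => m.
by have := H m m (leqnn m); rewrite !coef_tr leqnn.
Qed.

Lemma eqm_le n m p q : (m <= n)%N -> eqm n p q -> eqm m p q.
Proof. by move=> Hmn H i Hi; apply: H; apply: leq_trans Hmn. Qed.

Lemma tr0 n a : (tr n a)`_0 = a 0%N.
Proof. by rewrite coef_tr. Qed.

Lemma comp_one_l h : h 0%N = 0 -> fps_comp fps_one h = fps_one.
Proof.
move=> h0; apply: fps_ext => n; apply: eqm_trans (@tr_comp n _ _ h0) _.
by rewrite tr_one -polyC1 comp_polyC.
Qed.

Lemma mul_one_r g : fps_mul g fps_one = g.
Proof.
apply: fps_ext => n; apply: eqm_trans (@tr_mul n _ _) _.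
by rewrite tr_one mulr1.
Qed.

Lemma comp_negX f : f 0%N = 0 -> fps_comp (fps_opp fps_X) f = fps_opp f.
Proof.
move=> f0; apply: fps_ext => n; apply: eqm_trans (@tr_comp n _ _ f0) _.
rewrite !tr_opp.
have F0 : (tr n f)`_0 = 0 by rewrite tr0.
apply: eqm_trans (eqm_comp1 F0 (eqm_opp (@tr_X n))) _.
by rewrite -scaleN1r comp_polyZ comp_polyX scaleN1r.
Qed.

Lemma key n g h : h 0%N = 0 ->
  eqm n (tr n (fps_mul g (fps_comp g h))) (tr n g * (tr n g \Po tr n h)).
Proof.
move=> h0; apply: eqm_trans (@tr_mul n _ _) _.
exact: eqm_mul (@eqm_refl n _) (@tr_comp n _ _ h0).
Qed.

Lemma PI_iff f g : f 0%N = 0 -> f 1%N != 0 ->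
  fps_comp (fps_opp f) (fps_opp f) = fps_X ->
  PI_set f g <-> g 0%N != 0 /\ fps_mul g (fps_comp g (fps_opp f)) = fps_one.
Proof.
move=> f0 f1 Hc; rewrite /PI_set /pseudo_involution.
have -> : riordan_mul (g, f) riordan_M = (g, fps_opp f).
  by rewrite /riordan_mul /riordan_M /= comp_one_l // mul_one_r comp_negX.
rewrite /riordan_mul /= Hc /riordan_id /is_riordan /in_F0 /=.
split.
  by move=> [H1 [_ H2]]; split => //; case: H2.
by move=> [H1 H2]; rewrite H2; split => //; split => //.
Qed.

Section Group.
Variable phi : fps.
Hypothesis phi0 : phi 0%N = 0.

Lemma closed_mul g h :
  fps_mul g (fps_comp g phi) = fps_one -> fps_mul h (fps_comp h phi) = fps_one ->
  fps_mul (fps_mul g h) (fps_comp (fps_mul g h) phi) = fps_one.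
Proof.
move=> Hg Hh; apply: fps_ext => n.
have P0 : (tr n phi)`_0 = 0 by rewrite tr0.
have Eg := @key n g phi phi0; rewrite Hg tr_one in Eg.
have Eh := @key n h phi phi0; rewrite Hh tr_one in Eh.
apply: eqm_trans (@key n _ phi phi0) _.
apply: eqm_trans (eqm_mul (@tr_mul n g h) (eqm_comp1 P0 (@tr_mul n g h))) _.
rewrite tr_one comp_polyM.
set G := tr n g; set H := tr n h; set GP := G \Po _; set HP := H \Po _.
have -> : G * H * (GP * HP) = (G * GP) * (H * HP) by ring.
rewrite -[1](mulr1 1); apply: eqm_mul; exact: eqm_sym.
Qed.

Lemma closed_inv g h :
  fps_mul g (fps_comp g phi) = fps_one -> fps_mul g h = fps_one ->
  fps_mul h (fps_comp h phi) = fps_one.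
Proof.
move=> Hg Hgh; apply: fps_ext => n.
have P0 : (tr n phi)`_0 = 0 by rewrite tr0.
have Eg := @key n g phi phi0; rewrite Hg tr_one in Eg.
have E1 := @tr_mul n g h; rewrite Hgh tr_one in E1.
have E2 := eqm_comp1 P0 E1; rewrite comp_polyM -polyC1 comp_polyC polyC1 in E2.
apply: eqm_trans (@key n _ phi phi0) _; rewrite tr_one.
set G := tr n g in Eg E1 E2 *; set H := tr n h in E1 E2 *.
set GP := G \Po _ in Eg E2 *; set HP := H \Po _ in E2 *.
rewrite -[H * HP]mul1r.
apply: eqm_trans (eqm_mul Eg (@eqm_refl n (H * HP))) _.
have -> : G * GP * (H * HP) = (G * H) * (GP * HP) by ring.
rewrite -[1](mulr1 1); apply: eqm_mul; exact: eqm_sym.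
Qed.
End Group.

Lemma coef0_exp (Q : {poly C}) k : (Q ^+ k)`_0 = Q`_0 ^+ k.
Proof. by elim: k => [|k IH]; rewrite ?expr0 ?coef1 // !exprS coef0M IH. Qed.

Lemma two_nz : (2%:R : C) != 0.
Proof. by rewrite /C pnatr_eq0. Qed.

Lemma phi1_neq1 (phi : fps) : phi 0%N = 0 -> fps_comp phi phi = fps_X ->
  phi <> fps_X -> phi 1%N != 1.
Proof.
move=> phi0 Hc Hne; apply/negP => /eqP phi1.
have [m Hm] : exists m, phi m != fps_X m.
  apply/not_all_not_ex => H; apply: Hne; apply: functional_extensionality => m.
  by have := H m; case: eqP.
have Hex : exists m, (fun m => phi m != fps_X m) m by exists m.
case: (ex_minnP Hex) => {m Hm Hex} m Hm Hmin.
have Hlt : forall i, (i < m)%N -> phi i = fps_X i.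
  move=> i Hi; apply/eqP; apply/negPn/negP => Hi'.
  by have := Hmin i Hi'; rewrite leqNgt Hi.
case: m Hm Hmin Hlt => [|[|k]] Hm Hmin Hlt.
- by rewrite phi0 /fps_X eqxx in Hm.
- by rewrite phi1 /fps_X eqxx in Hm.
set a := phi k.+2.
have Xk : fps_X k.+2 = 0 by [].
have Ea : a != 0 by rewrite /a -Xk.
pose P : {poly C} := 'X + a *: 'X^(k.+2).
have EP : tr k.+2 phi = P.
  apply/polyP => i; rewrite coef_tr /P coefD coefZ !coefXn coefX.
  case: (ltngtP i k.+2) => Hi.
  - by rewrite Hlt // mulr0 addr0.
  - by rewrite mulr0 addr0; case: i Hi => [|[|i]].
  - by rewrite Hi mulr1 /= add0r.
have E := @tr_comp k.+2 phi phi phi0 k.+2 (leqnn _).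
rewrite Hc coef_tr leqnn Xk EP in E.
have C1 : P`_k.+2 = a.
  by rewrite /P coefD coefZ coefXn coefX eqxx mulr1 /= add0r.
have C2 : (P ^+ k.+2)`_k.+2 = 1.
  have -> : P = 'X^1 * (1 + a *: 'X^(k.+1)) :> {poly C}.
    by rewrite /P mulrDr mulr1 -scalerAr -exprD add1n expr1.
  rewrite exprMn -exprM mul1n coefXnM ltnn subnn coef0_exp coefD coef1 coefZ coefXn /=.
  by rewrite mulr0 addr0 expr1n.
have : (P \Po P)`_k.+2 = a + a.
  by rewrite {1}/P comp_polyD comp_polyX comp_polyZ comp_Xn_poly coefD coefZ C1 C2 mulr1.
rewrite -E => /eqP; rewrite eq_sym -mulr2n -mulr_natr mulf_eq0 (negPf Ea) /=.
by rewrite (negPf two_nz).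
Qed.

Definition afam (c : C) : fps := fun k => (k == 0)%:R + c * (k == 1)%:R.
Definition rfam (c : C) : fps := fun k => (-c) ^+ k.
Definition gfam (phi : fps) (c : C) : fps := fps_mul (afam c) (fps_comp (rfam c) phi).

Lemma tr_afam n c : eqm n (tr n (afam c)) (1 + c *: 'X).
Proof. by move=> i Hi; rewrite coef_tr Hi coefD coef1 coefZ coefX. Qed.

Lemma AR n c : eqm n (tr n (afam c) * tr n (rfam c)) 1.
Proof.
apply: eqm_trans (eqm_mul (@tr_afam n c) (@eqm_refl n _)) _.
move=> i Hi; rewrite mulrDl mul1r -scalerAl mulrC coefD coefZ coefMX coef1.
case: i Hi => [|i] Hi /=; first by rewrite coef_tr /rfam expr0 mulr0 addr0.
rewrite !coef_tr Hi (leq_trans (leqnSn i) Hi) /rfam exprS mulNr.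
by apply: addNr.
Qed.

Lemma gfam_PI phi c : phi 0%N = 0 -> fps_comp phi phi = fps_X ->
  fps_mul (gfam phi c) (fps_comp (gfam phi c) phi) = fps_one.
Proof.
move=> phi0 Hc; apply: fps_ext => n.
have P0 : (tr n phi)`_0 = 0 by rewrite tr0.
have EPP := @tr_comp n phi phi phi0; rewrite Hc in EPP.
have EPP' := eqm_trans (eqm_sym EPP) (@tr_X n).
apply: eqm_trans (@key n _ phi phi0) _.
set A := tr n (afam c); set R := tr n (rfam c); set P := tr n phi.
have EG : eqm n (tr n (gfam phi c)) (A * (R \Po P)).
  apply: eqm_trans (@tr_mul n _ _) _.
  exact: eqm_mul (@eqm_refl n _) (@tr_comp n _ _ phi0).
apply: eqm_trans (eqm_mul EG (eqm_comp1 P0 EG)) _.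
rewrite comp_polyM -comp_polyA.
have ER : eqm n (R \Po (P \Po P)) R.
  by have := eqm_comp2 R EPP'; rewrite comp_polyXr.
apply: eqm_trans (eqm_mul (@eqm_refl n (A * (R \Po P))) (eqm_mul (@eqm_refl n (A \Po P)) ER)) _.
have -> : A * (R \Po P) * ((A \Po P) * R) = (A * R) * ((A * R) \Po P).
  by rewrite comp_polyM; ring.
rewrite tr_one -[1](mulr1 1); apply: eqm_mul; first exact: AR.
have := eqm_comp1 P0 (@AR n c); rewrite -polyC1 comp_polyC.
by [].
Qed.

Lemma gfam0 phi c : gfam phi c 0%N = 1.
Proof.
rewrite /gfam /fps_mul /fps_comp !big_ord1 /= /afam /rfam /fps_pow /= /fps_one /=.
by rewrite mulr0 addr0 mul1r expr0 mul1r.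
Qed.

Lemma gfam1 phi c : phi 0%N = 0 -> gfam phi c 1%N = c * (1 - phi 1%N).
Proof.
move=> phi0.
rewrite /gfam /fps_mul /fps_comp !big_ord_recr !big_ord0 /= /afam /rfam.
rewrite mul_one_r subn0 subnn /fps_one /=.
rewrite !(mulr0, mul0r, mulr1, mul1r, addr0, add0r, expr0, expr1).
by rewrite mulrBr mulr1 mulNr addrC.
Qed.

Lemma mul0c a b : fps_mul a b 0%N = a 0%N * b 0%N.
Proof. by rewrite /fps_mul big_ord1. Qed.

Lemma natinj (m n : nat) : (m%:R : C) = n%:R -> m = n.
Proof. by move/eqP; rewrite /C eqr_nat => /eqP. Qed.

Theorem theorem25 (f : fps) :
  f 0%N = 0 -> f 1%N != 0 ->
  fps_comp (fps_opp f) (fps_opp f) = fps_X ->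
  fps_opp f <> fps_X ->
  (* subgroup of the multiplicative group F_0[[z]] *)
  [/\ PI_set f fps_one,
      (forall g h, PI_set f g -> PI_set f h -> PI_set f (fps_mul g h)),
      (forall g h, PI_set f g -> fps_mul g h = fps_one -> PI_set f h)
    & (* infinite *)
      exists u : nat -> fps, injective u /\ forall n, PI_set f (u n)].
Proof.
move=> f0 f1 Hc Hne.
have phi0 : fps_opp f 0%N = 0 by rewrite /fps_opp f0 oppr0.
split.
- apply/(PI_iff _ f0 f1 Hc); split; first by rewrite /fps_one oner_neq0.
  by rewrite comp_one_l // mul_one_r.
- move=> g h /(PI_iff _ f0 f1 Hc) [g0 Hg] /(PI_iff _ f0 f1 Hc) [h0 Hh].
  apply/(PI_iff _ f0 f1 Hc); split; first by rewrite mul0c mulf_neq0.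
  exact: closed_mul.
- move=> g h /(PI_iff _ f0 f1 Hc) [g0 Hg] Hgh.
  apply/(PI_iff _ f0 f1 Hc); split; last exact: closed_inv Hg Hgh.
  apply/eqP => h0; have := f_equal (fun a => a 0%N) Hgh.
  by rewrite /= mul0c h0 mulr0 /fps_one /= => /eqP; rewrite eq_sym oner_eq0.
- exists (fun n => gfam (fps_opp f) n%:R); split.
    move=> m n /= E; have := f_equal (fun a => a 1%N) E.
    rewrite /= !gfam1 //.
    have Hnz : 1 - fps_opp f 1%N != 0.
      by rewrite subr_eq0 eq_sym; exact: phi1_neq1.
    by move/(mulIf Hnz); apply: natinj.
  move=> n; apply/(PI_iff _ f0 f1 Hc); split; first by rewrite gfam0 oner_neq0.
  exact: gfam_PI.
Qed.
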